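(* Let $(B,\tau)$ be a topological space. Let $G(B,\tau)=(R,A,B,p,\partial)$ be the fibrous preorder with $$A=\{(U,x)\mid x\in U\in\tau\},\qquad p(U,x)=x,\qquad (U,x)Ry\iff y\in U,\qquad \partial((U,x),y)=(U,y).$$ Then $(B,\tau)$ is an Alexandrov space (i.e. every intersection of open sets is open) if and only if $G(B,\tau)$ is equivalent to a fibrous preorder of the form $(\le,B,B,1_B,\partial_\le)$ for some preorder $\le$ on $B$. Here $x\mathrel{R}y\iff x\le y$ and $\partial_\le(x,y)=y$.
   Context: A fibrous preorder is a sequence $R\xrightarrow{\partial}A\xrightarrow{p}B$ consisting of the following data: - sets $A$ and $B$; - a map $p\colon A\to B$; - a relation $R\subseteq A\times B$ (write $aRb$ for $(a,b)\in R$); - a map $\partial\colon R\to A$. These must satisfy, for all $a\in A$ and $b,y\in B$ with $aRb$: - (F1) $p\partial(a,b)=b$; - (F2) $aRp(a)$ (this holds for all $a\in A$); - (F3) $\partial(a,b)Ry\Rightarrow aRy$. Two fibrous preorders $(R,A,B,p,\partial)$ and $(R',A',B',p',\partial')$ are equivalent if $B=B'$ and there exist maps $\varphi\colon A\to A'$ and $\gamma\colon A'\to A$ with $p'\varphi=p$ and $p\gamma=p'$ such that, for all $a\in A$, $a'\in A'$ and $b\in B$, $\varphi(a)R'b\Rightarrow aRb$ and $\gamma(a')Rb\Rightarrow a'R'b$. *)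

(* Defs.v *)
(** A fibrous preorder  R --∂--> A --p--> B  over a fixed base set B.
    The relation R ⊆ A × B is a predicate; ∂ is defined on R, i.e. it takes a
    proof of aRb. *)
Record fibrous_preorder (B : Type) := FibrousPreorder {
  fp_A : Type;
  fp_p : fp_A -> B;
  fp_R : fp_A -> B -> Prop;
  fp_d : forall (a : fp_A) (b : B), fp_R a b -> fp_A;
  fp_F1 : forall a b (h : fp_R a b), fp_p (fp_d a b h) = b;
  fp_F2 : forall a, fp_R a (fp_p a);
  fp_F3 : forall a b y (h : fp_R a b), fp_R (fp_d a b h) y -> fp_R a y
}.

Arguments fp_A {B}.
Arguments fp_p {B}.
Arguments fp_R {B}.
Arguments fp_d {B}.

Definition fp_equiv {B : Type} (X Y : fibrous_preorder B) : Prop :=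
  exists (phi : fp_A X -> fp_A Y) (gam : fp_A Y -> fp_A X),
    (forall a, fp_p Y (phi a) = fp_p X a) /\
    (forall a', fp_p X (gam a') = fp_p Y a') /\
    (forall a b, fp_R Y (phi a) b -> fp_R X a b) /\
    (forall a' b, fp_R X (gam a') b -> fp_R Y a' b).

Record topology (B : Type) := Topology {
  is_open : (B -> Prop) -> Prop;
  open_full : is_open (fun _ => True);
  open_union : forall F : (B -> Prop) -> Prop,
      (forall U, F U -> is_open U) -> is_open (fun x => exists U, F U /\ U x);
  open_inter : forall U V, is_open U -> is_open V -> is_open (fun x => U x /\ V x)
}.

Arguments is_open {B}.

Definition alexandrov {B : Type} (tau : topology B) : Prop :=
  forall F : (B -> Prop) -> Prop,
    (forall U, F U -> is_open tau U) -> is_open tau (fun x => forall U, F U -> U x).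

Definition G_A {B : Type} (tau : topology B) : Type :=
  { Ux : (B -> Prop) * B | is_open tau (fst Ux) /\ fst Ux (snd Ux) }.

Definition G_p {B : Type} (tau : topology B) (a : G_A tau) : B := snd (proj1_sig a).

Definition G_R {B : Type} (tau : topology B) (a : G_A tau) (y : B) : Prop :=
  fst (proj1_sig a) y.

Definition G_d {B : Type} (tau : topology B) (a : G_A tau) (y : B)
  (h : G_R tau a y) : G_A tau :=
  exist _ (fst (proj1_sig a), y) (conj (proj1 (proj2_sig a)) h).

Lemma G_F1 {B : Type} (tau : topology B) a b (h : G_R tau a b) :
  G_p tau (G_d tau a b h) = b.
Proof. reflexivity. Qed.

Lemma G_F2 {B : Type} (tau : topology B) a : G_R tau a (G_p tau a).
Proof. exact (proj2 (proj2_sig a)). Qed.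

Lemma G_F3 {B : Type} (tau : topology B) a b y (h : G_R tau a b) :
  G_R tau (G_d tau a b h) y -> G_R tau a y.
Proof. intro H; exact H. Qed.

Definition G_fp {B : Type} (tau : topology B) : fibrous_preorder B :=
  FibrousPreorder B (G_A tau) (G_p tau) (G_R tau) (G_d tau)
    (G_F1 tau) (G_F2 tau) (G_F3 tau).

Definition preorder_fp {B : Type} (le : B -> B -> Prop)
  (hrefl : forall x, le x x)
  (htrans : forall x y z, le x y -> le y z -> le x z) : fibrous_preorder B.
Proof.
  refine (FibrousPreorder B B (fun x => x) le (fun x y _ => y) _ _ _).
  - intros; reflexivity.
  - exact hrefl.
  - intros a b y h H; exact (htrans a b y h H).
Defined.

(* Main.v *)
Require Import Defs.
From Stdlib Require Import FunctionalExtensionality PropExtensionality.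

Theorem mainTheorem6 (B : Type) (tau : topology B) :
  alexandrov tau <->
  exists (le : B -> B -> Prop)
         (hrefl : forall x, le x x)
         (htrans : forall x y z, le x y -> le y z -> le x z),
    fp_equiv (G_fp tau) (preorder_fp le hrefl htrans).
Proof.
  split.
  - intro Hal.
    set (le := fun x y : B => forall U, is_open tau U -> U x -> U y).
    assert (hrefl : forall x, le x x) by (intros x U _ H; exact H).
    assert (htrans : forall x y z, le x y -> le y z -> le x z)
      by (intros x y z H1 H2 U HU Hx; exact (H2 U HU (H1 U HU Hx))).
    exists le, hrefl, htrans.
    set (N := fun x : B => fun y => forall U, (is_open tau U /\ U x) -> U y).
    assert (HN : forall x, is_open tau (N x)).
    { intro x. apply (Hal (fun U => is_open tau U /\ U x)). intros U [H _]; exact H. }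
    exists (fun a : G_A tau => snd (proj1_sig a)).
    unshelve eexists.
    { intro x. exists (N x, x). split. apply HN. intros U [_ H]; exact H. }
    split; [|split;[|split]].
    + intro a; reflexivity.
    + intro a; reflexivity.
    + intros [[U x] [HU Hx]] b H. simpl in *. exact (H U HU Hx).
    + intros x b H. simpl in *. unfold G_R in H; simpl in H.
      intros U HU Hx. exact (H U (conj HU Hx)).
  - intros [le [hrefl [htrans [phi [gam [Hp1 [Hp2 [HR1 HR2]]]]]]]].
    intros F HF.
    pose (I := fun x => forall U, F U -> U x).
    set (V := fun x : B => fst (proj1_sig (gam x))).
    assert (Hg : forall x, snd (proj1_sig (gam x)) = x) by (intro x; apply (Hp2 x)).
    assert (Hun : is_open tau (fun y => exists W, (exists x, I x /\ W = V x) /\ W y)).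
    { apply open_union. intros W [x [_ ->]]. unfold V.
      exact (proj1 (proj2_sig (gam x))). }
    change (is_open tau I); replace I with
        (fun y => exists W, (exists x, I x /\ W = V x) /\ W y); [exact Hun|].
    apply functional_extensionality; intro y; apply propositional_extensionality.
    split.
    + intros [W [[x [Hx ->]] Hy]] U HFU.
      assert (Hle : le x y) by (apply (HR2 x y); exact Hy).
      assert (HUx : U x) by (apply Hx; exact HFU).
      pose (a := exist (fun Ux : (B -> Prop) * B => is_open tau (fst Ux) /\ fst Ux (snd Ux))
                   (U, x) (conj (HF U HFU) HUx) : G_A tau).
      assert (Hpa : phi a = x) by (apply (Hp1 a)).
      exact (HR1 a y (eq_ind_r (fun z => le z y) Hle Hpa)).
    + intro Hy. exists (V y). split.
      * exists y. split; [exact Hy|reflexivity].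
      * unfold V. pose proof (proj2 (proj2_sig (gam y))) as H. rewrite Hg in H. exact H.
Qed.
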